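(* The product of finitely many Krasinkiewicz spaces is a Krasinkiewicz space.
   Context: For a compact metrizable $X$, a map $g\colon X\to M$ is Krasinkiewicz if every subcontinuum of $X$ is either contained in a fiber of $g$ or contains a component of some fiber of $g$; a metrizable space $M$ is a Krasinkiewicz space if for every compact metrizable $X$ the Krasinkiewicz maps are dense in $C(X,M)$ with the uniform topology. *)

(* Defs.v *)
From Stdlib Require Import Reals.
From Stdlib Require Vectors.Fin.
Open Scope R_scope.

Record Top := {
  pt :> Type;
  is_open : (pt -> Prop) -> Prop;
  open_full : is_open (fun _ => True);
  open_inter : forall U V, is_open U -> is_open V -> is_open (fun x => U x /\ V x);
  open_union : forall (I : Type) (F : I -> pt -> Prop),
      (forall i, is_open (F i)) -> is_open (fun x => exists i, F i x)
}.

Record is_metric (T : Type) (d : T -> T -> R) : Prop := {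
  metric_nonneg : forall x y, 0 <= d x y;
  metric_eq0 : forall x y, d x y = 0 <-> x = y;
  metric_sym : forall x y, d x y = d y x;
  metric_triangle : forall x y z, d x z <= d x y + d y z
}.

Definition compatible_metric (X : Top) (d : X -> X -> R) : Prop :=
  is_metric X d /\
  forall U : X -> Prop,
    is_open X U <-> (forall x, U x -> exists r, 0 < r /\ forall y, d x y < r -> U y).

Definition metrizable (X : Top) : Prop := exists d, compatible_metric X d.

(** Compactness of a subset (in the subspace topology): every open cover has a finite subcover. *)
Definition compact_set (X : Top) (A : X -> Prop) : Prop :=
  forall (I : Type) (F : I -> X -> Prop),
    (forall i, is_open X (F i)) ->
    (forall x, A x -> exists i, F i x) ->
    exists l : list I, forall x, A x -> exists i, List.In i l /\ F i x.

Definition compact_space (X : Top) : Prop := compact_set X (fun _ => True).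

Definition compact_metrizable (X : Top) : Prop := compact_space X /\ metrizable X.

(** Connectedness of a subset (in the subspace topology). *)
Definition connected_set (X : Top) (A : X -> Prop) : Prop :=
  ~ exists U V : X -> Prop,
      is_open X U /\ is_open X V /\
      (forall x, A x -> U x \/ V x) /\
      (exists x, A x /\ U x) /\ (exists x, A x /\ V x) /\
      (forall x, A x -> U x -> V x -> False).

Definition subcontinuum (X : Top) (K : X -> Prop) : Prop :=
  (exists x, K x) /\ compact_set X K /\ connected_set X K.

Definition subset {T : Type} (A B : T -> Prop) : Prop := forall x, A x -> B x.

Definition component_of (X : Top) (F C : X -> Prop) : Prop :=
  (exists x, C x) /\ subset C F /\ connected_set X C /\
  forall D, connected_set X D -> subset C D -> subset D F -> subset D C.

Definition fiber {X M : Type} (g : X -> M) (m : M) : X -> Prop := fun x => g x = m.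

Definition continuous (X Y : Top) (f : X -> Y) : Prop :=
  forall V : Y -> Prop, is_open Y V -> is_open X (fun x => V (f x)).

Definition krasinkiewicz_map (X M : Top) (g : X -> M) : Prop :=
  forall K : X -> Prop, subcontinuum X K ->
    (exists m, subset K (fiber g m)) \/
    (exists m C, component_of X (fiber g m) C /\ subset C K).

(** Krasinkiewicz space: metrizable, and for every compact metrizable X the
    Krasinkiewicz maps are dense in C(X,M) with the uniform topology
    (the uniform topology w.r.t. any compatible metric on M; for compact X it
    does not depend on the choice of metric). *)
Definition krasinkiewicz_space (M : Top) : Prop :=
  metrizable M /\
  forall X : Top, compact_metrizable X ->
  forall d : M -> M -> R, compatible_metric M d ->
  forall f : X -> M, continuous X M f ->
  forall eps : R, 0 < eps ->
  exists g : X -> M, continuous X M g /\ krasinkiewicz_map X M g /\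
    forall x, d (f x) (g x) < eps.

(** Finite products (product topology; for finitely many factors the basic
    open boxes constrain every coordinate). *)
Section Prod.
Variables (n : nat) (M : Fin.t n -> Top).

Definition prod_open (U : (forall i, M i) -> Prop) : Prop :=
  forall x, U x -> exists V : forall i, M i -> Prop,
    (forall i, is_open (M i) (V i)) /\ (forall i, V i (x i)) /\
    (forall y, (forall i, V i (y i)) -> U y).

Lemma prod_open_full : prod_open (fun _ => True).
Proof.
  intros x _. exists (fun i _ => True). repeat split; auto.
  intro i. apply open_full.
Qed.

Lemma prod_open_inter U V : prod_open U -> prod_open V -> prod_open (fun x => U x /\ V x).
Proof.
  intros HU HV x [Ux Vx].
  destruct (HU x Ux) as [A [HA1 [HA2 HA3]]].
  destruct (HV x Vx) as [B [HB1 [HB2 HB3]]].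
  exists (fun i z => A i z /\ B i z). repeat split.
  - intro i. apply open_inter; auto.
  - apply HA2.
  - apply HB2.
  - apply HA3. intro i. apply H.
  - apply HB3. intro i. apply H.
Qed.

Lemma prod_open_union (I : Type) (F : I -> (forall i, M i) -> Prop) :
  (forall i, prod_open (F i)) -> prod_open (fun x => exists i, F i x).
Proof.
  intros HF x [j Hj].
  destruct (HF j x Hj) as [A [H1 [H2 H3]]].
  exists A. repeat split; auto. intros y Hy. exists j. auto.
Qed.

Definition prodTop : Top :=
  {| pt := forall i, M i; is_open := prod_open;
     open_full := prod_open_full; open_inter := prod_open_inter;
     open_union := prod_open_union |}.
End Prod.

(* Main.v *)
Require Import Defs.
From Stdlib Require Import Reals Lra List.
From Stdlib Require Vectors.Fin.
From Stdlib Require Import Classical ClassicalEpsilon FunctionalExtensionality PropExtensionality Eqdep_dec.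
Open Scope R_scope.

Fixpoint maxfin (n:nat) : (Fin.t n -> R) -> R :=
  match n return (Fin.t n -> R) -> R with
  | O => fun _ => 0
  | S k => fun f => Rmax (f Fin.F1) (maxfin k (fun j => f (Fin.FS j)))
  end.

Lemma maxfin_nonneg n (f : Fin.t n -> R) : 0 <= maxfin n f.
Proof.
  revert f; induction n as [|n IH]; intros f; simpl. lra.
  eapply Rle_trans; [apply IH|apply Rmax_r].
Qed.

Lemma maxfin_ge n (f : Fin.t n -> R) i : f i <= maxfin n f.
Proof.
  revert f i; induction n as [|n IH]; intros f i.
  - exact (Fin.case0 (fun i => _) i).
  - apply (Fin.caseS' i); simpl.
    + apply Rmax_l.
    + intro j. eapply Rle_trans; [apply (IH (fun j => f (Fin.FS j)) j)|apply Rmax_r].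
Qed.

Lemma maxfin_le n (f : Fin.t n -> R) r : 0 <= r -> (forall i, f i <= r) -> maxfin n f <= r.
Proof.
  revert f; induction n as [|n IH]; intros f Hr H; simpl. lra.
  apply Rmax_lub. apply H. apply IH; auto.
Qed.

Lemma maxfin_lt n (f : Fin.t n -> R) r : 0 < r -> (forall i, f i < r) -> maxfin n f < r.
Proof.
  revert f; induction n as [|n IH]; intros f Hr H; simpl. lra.
  apply Rmax_lub_lt. apply H. apply IH; auto.
Qed.

Lemma fin_pos n (P : Fin.t n -> R -> Prop) :
  (forall i r r', 0 < r' <= r -> P i r -> P i r') ->
  (forall i, exists r, 0 < r /\ P i r) -> exists r, 0 < r /\ forall i, P i r.
Proof.
  revert P; induction n as [|n IH]; intros P Hm He.
  - exists 1. split. lra. intro i; exact (Fin.case0 (fun i => _) i).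
  - destruct (He Fin.F1) as [r0 [r0p H0]].
    destruct (IH (fun j r => P (Fin.FS j) r)) as [r1 [r1p H1]].
    + intros; eapply Hm; eauto.
    + intro; apply He.
    + exists (Rmin r0 r1). split. unfold Rmin; destruct Rle_dec; lra.
      intro i. apply (Fin.caseS' i).
      * eapply Hm; [|exact H0]. split. unfold Rmin; destruct Rle_dec; lra. apply Rmin_l.
      * intro j. eapply Hm; [|exact (H1 j)]. split. unfold Rmin; destruct Rle_dec; lra. apply Rmin_r.
Qed.

Lemma connected_union (X : Top) (A B : X -> Prop) x :
  connected_set X A -> connected_set X B -> A x -> B x ->
  connected_set X (fun y => A y \/ B y).
Proof.
  intros HA HB Ax Bx [U [V [HU [HV [Hcov [[u [Hu1 Hu2]] [[v [Hv1 Hv2]] Hdis]]]]]]].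
  destruct (Hcov x (or_introl Ax)) as [Ux|Vx].
  - destruct Hv1 as [Av|Bv].
    + apply HA. exists U, V.
      refine (conj HU (conj HV (conj _ (conj _ (conj _ _))))).
      * intros y Ay; apply Hcov; left; auto.
      * exists x; auto.
      * exists v; auto.
      * intros y Ay; apply Hdis; left; auto.
    + apply HB. exists U, V.
      refine (conj HU (conj HV (conj _ (conj _ (conj _ _))))).
      * intros y Ay; apply Hcov; right; auto.
      * exists x; auto.
      * exists v; auto.
      * intros y Ay; apply Hdis; right; auto.
  - destruct Hu1 as [Au|Bu].
    + apply HA. exists U, V.
      refine (conj HU (conj HV (conj _ (conj _ (conj _ _))))).
      * intros y Ay; apply Hcov; left; auto.
      * exists u; auto.
      * exists x; auto.
      * intros y Ay; apply Hdis; left; auto.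
    + apply HB. exists U, V.
      refine (conj HU (conj HV (conj _ (conj _ (conj _ _))))).
      * intros y Ay; apply Hcov; right; auto.
      * exists u; auto.
      * exists x; auto.
      * intros y Ay; apply Hdis; right; auto.
Qed.

Lemma singleton_connected (X : Top) (x : X) : connected_set X (fun y => y = x).
Proof.
  intros [U [V [HU [HV [Hcov [[u [Hu1 Hu2]] [[v [Hv1 Hv2]] Hdis]]]]]]].
  subst. apply (Hdis x eq_refl Hu2 Hv2).
Qed.

Lemma component_exists (X : Top) (F : X -> Prop) x :
  F x -> exists C, component_of X F C /\ C x.
Proof.
  intros Fx.
  set (C := fun y => exists D, connected_set X D /\ subset D F /\ D x /\ D y).
  assert (Cx : C x).
  { exists (fun y => y = x). split. apply singleton_connected.
    split. intros y ->; auto. auto. }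
  exists C. split; [|exact Cx]. split; [exists x; exact Cx|].
  split; [intros y [D [_ [DF [_ Dy]]]]; auto|].
  split.
  - intros [U [V [HU [HV [Hcov [[u [Cu Uu]] [[v [Cv Vv]] Hdis]]]]]]].
    assert (DC : forall D, connected_set X D -> subset D F -> D x -> subset D C).
    { intros D HD DF Dx y Dy. exists D; auto. }
    destruct (Hcov x Cx) as [Ux|Vx].
    + destruct Cv as [D [HD [DF [Dx Dv]]]]. apply HD. exists U, V.
      refine (conj HU (conj HV (conj _ (conj _ (conj _ _))))).
      * intros y Dy; apply Hcov; apply (DC D); auto.
      * exists x; auto.
      * exists v; auto.
      * intros y Dy; apply Hdis; apply (DC D); auto.
    + destruct Cu as [D [HD [DF [Dx Du]]]]. apply HD. exists U, V.
      refine (conj HU (conj HV (conj _ (conj _ (conj _ _))))).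
      * intros y Dy; apply Hcov; apply (DC D); auto.
      * exists u; auto.
      * exists x; auto.
      * intros y Dy; apply Hdis; apply (DC D); auto.
  - intros D HD CD DF y Dy. exists D. repeat split; auto.
Qed.

Lemma ball_open (X:Top) d : compatible_metric X d -> forall x r, is_open X (fun y => d x y < r).
Proof.
  intros [Hm Hc] x r. apply Hc. intros y Hy. exists (r - d x y). split. lra.
  intros z Hz. pose proof (metric_triangle _ _ Hm x y z). lra.
Qed.

Lemma open_ball (X:Top) d : compatible_metric X d -> forall U x, is_open X U -> U x ->
  exists r, 0 < r /\ forall y, d x y < r -> U y.
Proof. intros [Hm Hc] U x HU Ux. exact (proj1 (Hc U) HU x Ux). Qed.

Lemma dist_self (X:Top) d : compatible_metric X d -> forall x, d x x = 0.
Proof. intros [Hm _] x. apply (metric_eq0 _ _ Hm). reflexivity. Qed.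

Definition cyl n (M : Fin.t n -> Top) (i : Fin.t n) (V : M i -> Prop) (j : Fin.t n) : M j -> Prop :=
  match Fin.eq_dec i j with
  | left e => eq_rect i (fun k => M k -> Prop) V j e
  | right _ => fun _ => True
  end.

Lemma proj_open n (M : Fin.t n -> Top) i (V : M i -> Prop) :
  is_open (M i) V -> prod_open n M (fun y => V (y i)).
Proof.
  intros HV x Hx. exists (cyl n M i V). split; [|split].
  - intro j. unfold cyl; destruct (Fin.eq_dec i j) as [e|e]; [destruct e; exact HV|apply open_full].
  - intro j. unfold cyl; destruct (Fin.eq_dec i j) as [e|e]; [destruct e; exact Hx|exact I].
  - intros y Hy. specialize (Hy i). unfold cyl in Hy. destruct (Fin.eq_dec i i) as [e|e].
    + rewrite (UIP_dec Fin.eq_dec e eq_refl) in Hy. exact Hy.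
    + congruence.
Qed.

Lemma fin_inter_open (X:Top) n (W : Fin.t n -> X -> Prop) :
  (forall i, is_open X (W i)) -> is_open X (fun x => forall i, W i x).
Proof.
  revert W; induction n as [|n IH]; intros W HW.
  - replace (fun x => forall i : Fin.t 0, W i x) with (fun _:X => True). apply open_full.
    apply functional_extensionality; intro x; apply propositional_extensionality; split;
      [intros _ i; exact (Fin.case0 (fun i => _) i) | auto].
  - replace (fun x => forall i, W i x) with
      (fun x => W Fin.F1 x /\ (fun x => forall j, W (Fin.FS j) x) x).
    + apply open_inter; [auto| apply (IH (fun j => W (Fin.FS j))); auto].
    + apply functional_extensionality; intro x; apply propositional_extensionality; split.
      * intros [h1 h2] i. apply (Fin.caseS' i); auto.
      * intros h; split; auto.
Qed.

Lemma tuple_cont (X:Top) n (M : Fin.t n -> Top) (g : forall i, X -> M i) :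
  (forall i, continuous X (M i) (g i)) -> continuous X (prodTop n M) (fun x i => g i x).
Proof.
  intros Hg U HU. change (prod_open n M U) in HU.
  set (I := {V : forall i, M i -> Prop | (forall i, is_open (M i) (V i)) /\
             forall y, (forall i, V i (y i)) -> U y}).
  replace (fun x => U (fun i => g i x)) with
    (fun x => exists v : I, forall i, proj1_sig v i (g i x)).
  - apply open_union. intro v. apply fin_inter_open. intro i.
    apply (Hg i (proj1_sig v i)). apply (proj1 (proj2_sig v)).
  - apply functional_extensionality; intro x; apply propositional_extensionality; split.
    + intros [v Hv]. apply (proj2 (proj2_sig v)); exact Hv.
    + intros Hx. destruct (HU _ Hx) as [V [H1 [H2 H3]]].
      exists (exist _ V (conj H1 H3)). exact H2.
Qed.

Lemma prod_metric n (M : Fin.t n -> Top) (dm : forall i, M i -> M i -> R) :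
  (forall i, compatible_metric (M i) (dm i)) ->
  compatible_metric (prodTop n M) (fun x y => maxfin n (fun i => dm i (x i) (y i))).
Proof.
  intros Hd. split.
  - constructor.
    + intros; apply maxfin_nonneg.
    + intros x y; split.
      * intro H. apply functional_extensionality_dep. intro i.
        apply (metric_eq0 _ _ (proj1 (Hd i))). apply Rle_antisym.
        -- rewrite <- H. apply (maxfin_ge n (fun i => dm i (x i) (y i)) i).
        -- apply (metric_nonneg _ _ (proj1 (Hd i))).
      * intro; subst. apply Rle_antisym.
        -- apply maxfin_le. lra. intro i. rewrite (dist_self _ _ (Hd i)). lra.
        -- apply maxfin_nonneg.
    + intros x y. apply Rle_antisym; apply maxfin_le; try apply maxfin_nonneg; intro i;
        rewrite (metric_sym _ _ (proj1 (Hd i))); apply (maxfin_ge n (fun i => dm i _ _) i).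
    + intros x y z. apply maxfin_le.
      * pose proof (maxfin_nonneg n (fun i => dm i (x i) (y i))).
        pose proof (maxfin_nonneg n (fun i => dm i (y i) (z i))). lra.
      * intro i. pose proof (metric_triangle _ _ (proj1 (Hd i)) (x i) (y i) (z i)).
        pose proof (maxfin_ge n (fun i => dm i (x i) (y i)) i).
        pose proof (maxfin_ge n (fun i => dm i (y i) (z i)) i). simpl in *. lra.
  - intro U; split.
    + intros HU x Ux. destruct (HU x Ux) as [V [HV1 [HV2 HV3]]].
      destruct (fin_pos n (fun i r => forall z, dm i (x i) z < r -> V i z)) as [r [rpos Hr]].
      * intros i r r' Hr' H z Hz. apply H. lra.
      * intro i. exact (open_ball _ _ (Hd i) (V i) (x i) (HV1 i) (HV2 i)).
      * exists r; split; auto. intros y Hy. apply HV3. intro i. apply Hr.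
        eapply Rle_lt_trans; [apply (maxfin_ge n (fun i => dm i (x i) (y i)) i) | exact Hy].
    + intros H x Ux. destruct (H x Ux) as [r [rpos Hr]].
      exists (fun i z => dm i (x i) z < r). split; [|split].
      * intro i; apply ball_open; auto.
      * intro i. rewrite (dist_self _ _ (Hd i)). lra.
      * intros y Hy. apply Hr. apply maxfin_lt; auto.
Qed.

Lemma kras_prod (X:Top) n (M : Fin.t n -> Top) (g : forall i, X -> M i) :
  (forall i, krasinkiewicz_map X (M i) (g i)) ->
  krasinkiewicz_map X (prodTop n M) (fun x i => g i x).
Proof.
  intros Hg K HK.
  destruct (classic (exists i m C, component_of X (fiber (g i) m) C /\ subset C K))
    as [[i [mi [Ci [HCi CiK]]]] | Hno].
  - right. destruct HCi as [[x Cx] [CiF [Ciconn Cimax]]].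
    exists (fun i => g i x).
    destruct (component_exists X (fiber (fun x i => g i x) (fun i => g i x)) x eq_refl)
      as [C [HC Cxx]].
    exists C. split; auto. intros y Cy. apply CiK.
    destruct HC as [_ [CF [Cconn _]]].
    assert (Hs : subset (fun z => C z \/ Ci z) Ci).
    { apply Cimax.
      - apply (connected_union X C Ci x); auto.
      - intros z Hz; right; auto.
      - intros z [Cz|Cz]; [|apply CiF; auto].
        pose proof (CF z Cz) as E. unfold fiber in *.
        rewrite <- (CiF x Cx). exact (f_equal (fun h => h i) E). }
    apply Hs; left; auto.
  - left. pose proof HK as HK'. destruct HK as [[x0 Kx0] _].
    exists (fun i => g i x0). intros y Ky. unfold fiber.
    apply functional_extensionality_dep. intro i.
    destruct (Hg i K HK') as [[m Hm]|Hc].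
    + unfold fiber in Hm. rewrite (Hm y Ky), (Hm x0 Kx0). reflexivity.
    + exfalso; apply Hno. destruct Hc as [m [C HC]]. exists i, m, C; auto.
Qed.

Lemma unif (X:Top) n (M : Fin.t n -> Top) (dm : forall i, M i -> M i -> R)
  (d : (forall i, M i) -> (forall i, M i) -> R) (f : X -> forall i, M i) eps :
  compact_space X -> (forall i, compatible_metric (M i) (dm i)) ->
  compatible_metric (prodTop n M) d -> continuous X (prodTop n M) f -> 0 < eps ->
  exists delta, 0 < delta /\ forall x (z : forall i, M i),
    (forall i, dm i (f x i) (z i) < delta) -> d (f x) z < eps.
Proof.
  intros Hc Hdm Hd Hf Heps.
  assert (Step1 : forall x0, exists r, 0 < r /\ forall z,
    (forall i, dm i (f x0 i) (z i) < r) -> d (f x0) z < eps/2).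
  { intro x0. pose proof (ball_open _ _ Hd (f x0) (eps/2)) as HB.
    change (prod_open n M (fun y => d (f x0) y < eps/2)) in HB.
    destruct (HB (f x0)) as [V [HV1 [HV2 HV3]]].
    { rewrite (dist_self _ _ Hd). lra. }
    destruct (fin_pos n (fun i r => forall z, dm i (f x0 i) z < r -> V i z)) as [r [rpos Hr]].
    - intros i r r' Hr' H z Hz. apply H. lra.
    - intro i. exact (open_ball _ _ (Hdm i) (V i) (f x0 i) (HV1 i) (HV2 i)).
    - exists r; split; auto. }
  set (I := {p : X * R | 0 < snd p /\ forall z,
    (forall i, dm i (f (fst p) i) (z i) < snd p) -> d (f (fst p)) z < eps/2}).
  set (F := fun (p : I) x => forall i,
     dm i (f (fst (proj1_sig p)) i) (f x i) < snd (proj1_sig p) / 2).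
  destruct (Hc I F) as [l Hl].
  - intro p. unfold F.
    apply (Hf (fun y => forall i, dm i (f (fst (proj1_sig p)) i) (y i) < snd (proj1_sig p) / 2)).
    intros y Hy. exists (fun i z => dm i (f (fst (proj1_sig p)) i) z < snd (proj1_sig p) / 2).
    split; [|split]; auto. intro i; apply ball_open; auto.
  - intros x _. destruct (Step1 x) as [r [rpos Hr]].
    exists (exist _ (x, r) (conj rpos Hr)). unfold F; simpl. intro i.
    rewrite (dist_self _ _ (Hdm i)). lra.
  - assert (dpos : forall l0 : list I, 0 < fold_right (fun (p : I) acc => Rmin (snd (proj1_sig p) / 2) acc) 1 l0).
    { induction l0 as [|a l0 IH]; simpl. lra.
      pose proof (proj1 (proj2_sig a)) as Ha. apply Rmin_glb_lt; [|exact IH]. apply Rdiv_lt_0_compat; [exact Ha|lra]. }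
    assert (dle : forall l0 p, In p l0 -> fold_right (fun (p : I) acc => Rmin (snd (proj1_sig p) / 2) acc) 1 l0 <= snd (proj1_sig p) / 2).
    { induction l0 as [|a l0 IH]; simpl; intros p Hin.
      - destruct Hin.
      - destruct Hin as [<-|Hin]. apply Rmin_l.
        eapply Rle_trans; [apply Rmin_r|auto]. }
    set (delta := fold_right (fun (p : I) acc => Rmin (snd (proj1_sig p) / 2) acc) 1 l).
    specialize (dpos l). specialize (dle l). fold delta in dpos, dle.
    exists delta. split; auto. intros x z Hz.
    destruct (Hl x Logic.I) as [p [pin Fx]].
    pose proof (dle p pin) as Hdp.
    destruct p as [[x0 r] [rpos Hr]]. unfold F in Fx; simpl in *.
    assert (H1 : d (f x0) z < eps/2).
    { apply Hr. intro i. pose proof (metric_triangle _ _ (proj1 (Hdm i)) (f x0 i) (f x i) (z i)).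
      pose proof (Fx i). pose proof (Hz i). lra. }
    assert (H2 : d (f x0) (f x) < eps/2).
    { apply Hr. intro i. pose proof (Fx i). lra. }
    pose proof (metric_triangle _ _ (proj1 Hd) (f x) (f x0) z).
    rewrite (metric_sym _ _ (proj1 Hd) (f x) (f x0)) in *. lra.
Qed.

Theorem proposition3p5 (n : nat) (M : Fin.t n -> Top) :
  (forall i, krasinkiewicz_space (M i)) -> krasinkiewicz_space (prodTop n M).
Proof.
  intros HK.
  set (dm := fun i => proj1_sig (constructive_indefinite_description _ (proj1 (HK i)))).
  assert (Hdm : forall i, compatible_metric (M i) (dm i)).
  { intro i. exact (proj2_sig (constructive_indefinite_description _ (proj1 (HK i)))). }
  split.
  - exists (fun x y => maxfin n (fun i => dm i (x i) (y i))). apply prod_metric; auto.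
  - intros X HX d Hd f Hf eps Heps.
    destruct (unif X n M dm d f eps (proj1 HX) Hdm Hd Hf Heps) as [delta [dpos Hdelta]].
    assert (H : forall i, exists gi : X -> M i, continuous X (M i) gi /\
       krasinkiewicz_map X (M i) gi /\ forall x, dm i (f x i) (gi x) < delta).
    { intro i. apply (proj2 (HK i) X HX (dm i) (Hdm i) (fun x => f x i)); auto.
      intros V HV. apply (Hf (fun y => V (y i))). apply proj_open; auto. }
    set (gg := fun i => proj1_sig (constructive_indefinite_description _ (H i))).
    assert (Hgg : forall i, continuous X (M i) (gg i) /\
       krasinkiewicz_map X (M i) (gg i) /\ forall x, dm i (f x i) (gg i x) < delta).
    { intro i. exact (proj2_sig (constructive_indefinite_description _ (H i))). }
    exists (fun x i => gg i x). split; [|split].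
    + apply tuple_cont. intro i; apply Hgg.
    + apply kras_prod. intro i; apply Hgg.
    + intro x. apply Hdelta. intro i. apply Hgg.
Qed.
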